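(* Let $d\ge 2$ and let $C$, $C_1$, $C_2$ be $d$-dimensional copulas admitting tail copulas $\Lambda(\cdot;C)$, $\Lambda_1(\cdot;C_1)$, $\Lambda_2(\cdot;C_2)$, respectively. Then: (i) The supremum in $\lambda^\ast(C)=\sup_{\bm b\in\mathcal B}\Lambda(\bm b;C)$ is attained; hence $\lambda^\ast(C)=\max_{\bm b\in\mathcal B}\Lambda(\bm b;C)$. (ii) $\lambda^\ast(C)=1$ if and only if $\Lambda(\bm x;C)=\min\{x_1,\dots,x_d\}$ for all $\bm x\in(0,\infty)^d$. (iii) $\lambda^\ast(C)=0$ if and only if $\Lambda(\bm x;C)=0$ for all $\bm x\in(0,\infty)^d$. (iv) If $\Lambda_1(\bm x;C_1)\le\Lambda_2(\bm x;C_2)$ for all $\bm x\in(0,\infty)^d$, then $\lambda^\ast(C_1)\le\lambda^\ast(C_2)$. (v) For all $t\in[0,1]$, $\lambda^\ast(tC_1+(1-t)C_2)\le t\lambda^\ast(C_1)+(1-t)\lambda^\ast(C_2)$. (vi) Let $(C_n)_{n\in\mathbb N}$ be a sequence of $d$-dimensional copulas each admitting a tail copula. If $\Lambda(\bm x;C_n)\to\Lambda(\bm x;C)$ for every $\bm x\in(0,\infty)^d$, then $\lambda^\ast(C_n)\to\lambda^\ast(C)$.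
   Context: A $d$-dimensional copula is a distribution function on $[0,1]^d$ with standard uniform margins. If for a copula $C$ the limit $\Lambda(\bm x;C)=\lim_{t\downarrow0}C(t\bm x)/t$ exists for every $\bm x\in(0,\infty)^d$, the function $\Lambda(\cdot;C):(0,\infty)^d\to[0,\infty)$ is called the (lower) tail copula of $C$. Let $\mathcal B=\{\bm b\in(0,\infty)^d:\prod_{j=1}^d b_j=1\}$. The maximal tail concordance measure (MTCM) of $C$ is $\lambda^\ast(C)=\sup_{\bm b\in\mathcal B}\Lambda(\bm b;C)$. *)

(* Defs.v *)
From HB Require Import structures.
From mathcomp Require Import all_boot all_order all_algebra.
From mathcomp Require Import all_classical all_reals all_analysis.
Set Implicit Arguments. Unset Strict Implicit. Unset Printing Implicit Defensive.
Import Order.TTheory GRing.Theory Num.Theory.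
Import numFieldNormedType.Exports.
Local Open Scope classical_set_scope.
Local Open Scope ring_scope.

Section Copulas.
Variables (R : realType) (d : nat).

Definition in_cube (u : 'I_d -> R) : Prop := forall j, 0 <= u j <= 1.
Definition pos_orthant (x : 'I_d -> R) : Prop := forall j, 0 < x j.

Definition vertex (a b : 'I_d -> R) (S : {set 'I_d}) : 'I_d -> R :=
  fun j => if j \in S then b j else a j.

Definition Cvolume (C : ('I_d -> R) -> R) (a b : 'I_d -> R) : R :=
  \sum_(S : {set 'I_d}) (-1) ^+ (d - #|S|) * C (vertex a b S).

(* A d-dimensional copula (Nelsen's definition): a function on [0,1]^d that is
   grounded, has uniform margins and is d-increasing; equivalently the
   distribution function of a probability on [0,1]^d with uniform margins. *)
Definition copula (C : ('I_d -> R) -> R) : Prop :=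
  [/\ (forall u, in_cube u -> (exists j, u j = 0) -> C u = 0),
      (forall u, in_cube u -> forall j, (forall k, k != j -> u k = 1) -> C u = u j)
    & (forall a b, in_cube a -> in_cube b -> (forall j, a j <= b j) ->
         0 <= Cvolume C a b)].

Definition scaled (C : ('I_d -> R) -> R) (x : 'I_d -> R) : R -> R :=
  fun t => C (fun j => t * x j) / t.

Definition has_tail_copula (C : ('I_d -> R) -> R) : Prop :=
  forall x, pos_orthant x -> cvg (scaled C x @ 0^'+).

Definition tail_copula (C : ('I_d -> R) -> R) (x : 'I_d -> R) : R :=
  lim (scaled C x @ 0^'+).

Definition Bset : set ('I_d -> R) :=
  [set b | pos_orthant b /\ \prod_j b j = 1].

Definition mtcm (C : ('I_d -> R) -> R) : R := sup (tail_copula C @` Bset).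

Definition coord_min (x : 'I_d -> R) : R := inf (range x).

End Copulas.

(* Main.v *)
Require Import Defs.
From HB Require Import structures.
From mathcomp Require Import all_boot all_order all_algebra.
From mathcomp Require Import all_classical all_reals all_analysis.
From mathcomp Require Import zify ring lra.
Set Implicit Arguments. Unset Strict Implicit. Unset Printing Implicit Defensive.
Import Order.TTheory GRing.Theory Num.Theory.
Import numFieldNormedType.Exports.
Local Open Scope classical_set_scope.
Local Open Scope ring_scope.

Lemma scale_right (R : realType) (c : R) : 0 < c -> (fun t => t * c) @ 0^'+ --> 0^'+.
Proof.
move=> c0 P [r /= r0 HP]. exists (r / c) => /=; first by rewrite divr_gt0.
move=> t /= tr t0.
apply: (HP _ _ (mulr_gt0 t0 c0)) => /=.
move: tr; rewrite !sub0r !normrN !gtr0_norm ?mulr_gt0 //.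
by rewrite ltr_pdivlMr.
Qed.

Section Basics.
Variables (R : realType) (d : nat).
Implicit Types (C : ('I_d -> R) -> R) (u v x y : 'I_d -> R).

Definition upd u (j : 'I_d) (a : R) : 'I_d -> R := fun k => if k == j then a else u k.

Lemma vol1 C u j a : copula C -> in_cube u -> 0 <= a <= u j -> C (upd u j a) <= C u.
Proof.
case=> Cg _ Cv uc /andP[a0 au].
have hd : (0 < d)%N := leq_ltn_trans (leq0n j) (ltn_ord j).
pose lo : 'I_d -> R := fun k => if k == j then a else 0.
have loc : in_cube lo.
  move=> k; rewrite /lo; case: eqP => _; last by rewrite lexx ler01.
  by rewrite a0 /= (le_trans au) //; case/andP: (uc j).
have lou : forall k, lo k <= u k.
  move=> k; rewrite /lo; case: eqP => [->//|_]; by case/andP: (uc k).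
have := Cv lo u loc uc lou; rewrite /Cvolume.
rewrite (bigD1 [set: 'I_d]%SET) //= (bigD1 [set~ j]%SET) /=; last first.
  by apply/eqP => /setP /(_ j); rewrite !inE eqxx.
rewrite big1 ?addr0; last first.
  move=> S /andP[HT Hj].
  suff -> : C (vertex lo u S) = 0 by rewrite mulr0.
  have vc : in_cube (vertex lo u S).
    by move=> k; rewrite /vertex; case: (k \in S).
  apply: Cg => //.
  case/boolP: [exists k, (k != j) && (k \notin S)].
    case/existsP=> k /andP[kj kS]; exists k.
    by rewrite /vertex (negbTE kS) /lo (negbTE kj).
  rewrite negb_exists => /forallP H; exfalso.
  have H' : forall k, k != j -> k \in S.
    by move=> k kj; move: (H k); rewrite kj /= negbK.
  case/boolP: (j \in S) => jS.
    move/eqP: HT; apply; apply/setP=> k; rewrite inE.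
    by case: (eqVneq k j) => [->//|/H'].
  move/eqP: Hj; apply; apply/setP=> k; rewrite !inE.
  by case: (eqVneq k j) => [->|/H' ->] //; rewrite (negbTE jS).
have -> : #|[set: 'I_d]%SET| = d by rewrite cardsE card_ord.
rewrite subnn expr0 mul1r cardsC1 card_ord.
have -> : (d - d.-1 = 1)%N by lia.
rewrite expr1 mulN1r subr_ge0.
have -> : vertex lo u [set: 'I_d]%SET = u by apply: funext => k; rewrite /vertex inE.
have -> : vertex lo u [set~ j]%SET = upd u j a.
  by apply: funext => k; rewrite /vertex /upd /lo !inE; case: eqVneq.
by [].
Qed.

Lemma C_mono C u v : copula C -> in_cube u -> in_cube v -> (forall j, u j <= v j) -> C u <= C v.
Proof.
move=> cC uc vc uv.
pose w (m : nat) : 'I_d -> R := fun k => if (k < m)%N then v k else u k.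
have wc m : in_cube (w m) by move=> k; rewrite /w; case: ifP.
suff H : forall m, (m <= d)%N -> C u <= C (w m).
  have := H d (leqnn d).
  by have -> : w d = v by apply: funext => k; rewrite /w ltn_ord.
elim=> [_|m IH md].
  by have -> : w 0%N = u by apply: funext => k; rewrite /w ltn0.
apply: le_trans (IH (ltnW md)) _.
have -> : w m = upd (w m.+1) (Ordinal md) (u (Ordinal md)).
  apply: funext => k; rewrite /w /upd ltnS.
  case: eqVneq => [->|kj] /=; first by rewrite ltnn.
  have km : (nat_of_ord k != m).
    by move: kj; apply: contra => /eqP e; apply/eqP/val_inj.
  by rewrite [(k <= m)%N]leq_eqVlt (negbTE km).
apply: vol1 => //; case/andP: (uc (Ordinal md)) => -> _ /=.
by rewrite /w /= ltnSn uv.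
Qed.

Lemma C_ge0 C u : copula C -> in_cube u -> (0 < d)%N -> 0 <= C u.
Proof.
move=> cC uc hd.
have zc : in_cube (fun _ : 'I_d => 0 : R).
  by move=> k /=; rewrite lexx ler01.
case: (cC) => Cg _ _.
rewrite -(Cg _ zc); last by exists (Ordinal hd).
by apply: C_mono => // k; case/andP: (uc k).
Qed.

Lemma C_le C u j : copula C -> in_cube u -> C u <= u j.
Proof.
move=> cC uc.
pose v : 'I_d -> R := fun k => if k == j then u j else 1.
have vc : in_cube v by move=> k; rewrite /v; case: eqP => _ //; rewrite ler01 lexx.
case: (cC) => _ Cm _.
have <- : C v = u j.
  by rewrite (Cm v vc j) /v ?eqxx // => k /negbTE ->.
apply: C_mono => // k; rewrite /v; case: eqVneq => [->//|_].
by case/andP: (uc k).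
Qed.

Lemma near_cube x : pos_orthant x ->
  \forall t \near 0^'+, 0 < t /\ in_cube (fun j => t * x j).
Proof.
move=> xp. pose M := \sum_j x j + 1.
have M0 : 0 < M by rewrite /M ltr_wpDl // sumr_ge0 // => j _; apply: ltW.
near=> t.
have t0 : 0 < t by near: t; exact: nbhs_right_gt.
have tM : t < M^-1 by near: t; apply: nbhs_right_lt; rewrite invr_gt0.
split => // j; rewrite mulr_ge0 ?ltW //=.
have xM : x j <= M.
  rewrite /M (bigD1 j) //= -addrA lerDl addr_ge0 // sumr_ge0 // => k _.
  exact: ltW.
 apply: (le_lt_trans (ler_wpM2l (ltW t0) xM)).
by rewrite -ltr_pdivlMr // mul1r.
Unshelve. all: by end_near.
Qed.

End Basics.

Section Tail.
Variables (R : realType) (d : nat) (hd : (0 < d)%N).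
Variable C : ('I_d -> R) -> R.
Hypotheses (cC : copula C) (hC : has_tail_copula C).
Local Notation L := (tail_copula C).

Lemma L_ge0 x : pos_orthant x -> 0 <= L x.
Proof.
move=> xp; apply: limr_ge; first exact: hC.
near=> t.
have [t0 tc] : 0 < t /\ in_cube (fun j => t * x j) by near: t; exact: near_cube.
by rewrite /scaled; apply: divr_ge0; [exact: C_ge0 | exact: ltW].
Unshelve. all: by end_near.
Qed.

Lemma L_le x j : pos_orthant x -> L x <= x j.
Proof.
move=> xp; apply: limr_le; first exact: hC.
near=> t.
have [t0 tc] : 0 < t /\ in_cube (fun j => t * x j) by near: t; exact: near_cube.
by rewrite /scaled ler_pdivrMr // mulrC; apply: (C_le j cC tc).
Unshelve. all: by end_near.
Qed.

Lemma L_mono x y : pos_orthant x -> pos_orthant y -> (forall j, x j <= y j) -> L x <= L y.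
Proof.
move=> xp yp xy; apply: ler_lim; [exact: hC|exact: hC|].
near=> t.
have [t0 tc] : 0 < t /\ in_cube (fun j => t * x j) by near: t; exact: near_cube.
have [_ tc'] : 0 < t /\ in_cube (fun j => t * y j) by near: t; exact: near_cube.
rewrite /scaled ler_pM2r ?invr_gt0 //; apply: C_mono => // j.
by rewrite ler_pM2l.
Unshelve. all: by end_near.
Qed.

Lemma pos_scale (x : 'I_d -> R) c : pos_orthant x -> 0 < c -> pos_orthant (fun j => c * x j).
Proof. by move=> xp c0 j; rewrite mulr_gt0. Qed.

Lemma L_hom x c : pos_orthant x -> 0 < c -> L (fun j => c * x j) = c * L x.
Proof.
move=> xp c0.
apply: cvg_lim => //.
have -> : scaled C (fun j => c * x j) = fun t => c * scaled C x (t * c).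
  apply: funext => t; rewrite /scaled.
  have -> : (fun j => t * (c * x j)) = (fun j => (t * c) * x j).
    by apply: funext => j; rewrite mulrA.
  by rewrite invfM mulrCA (mulrCA c) mulfV ?gt_eqF // mulr1.
apply: cvgMl_tmp.
exact: (cvg_comp _ _ (scale_right c0) (hC xp)).
Qed.

Lemma one_B : @Bset R d (fun _ => 1).
Proof. by split; [move=> j; exact: ltr01 | rewrite prodr_const expr1n]. Qed.

Lemma L_le1 b : @Bset R d b -> L b <= 1.
Proof.
case=> bp bprod.
have l0 := L_ge0 bp.
rewrite -(expr_le1 hd l0) -[d in _ ^+ d]card_ord -prodr_const -[X in _ <= X]bprod.
apply: ler_prod => j _; rewrite l0 /=; exact: L_le.
Qed.

Definition LB := L @` @Bset R d.

Lemma LB_ne : LB !=set0.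
Proof. by exists (L (fun _ => 1)); exists (fun _ => 1) => //; exact: one_B. Qed.

Lemma LB_ub : has_ubound LB.
Proof. by exists 1 => _ [b Bb <-]; exact: L_le1. Qed.

Lemma LB_sup : has_sup LB.
Proof. by split; [exact: LB_ne | exact: LB_ub]. Qed.

Lemma L_le_mtcm b : @Bset R d b -> L b <= mtcm C.
Proof. by move=> Bb; apply: (ub_le_sup LB_ub); exists b. Qed.

Lemma mtcm_le m : (forall b, @Bset R d b -> L b <= m) -> mtcm C <= m.
Proof. by move=> H; apply: ge_sup; [exact: LB_ne| move=> _ [b Bb <-]; exact: H]. Qed.

Lemma mtcm_ge0 : 0 <= mtcm C.
Proof. exact: le_trans (L_ge0 (proj1 one_B)) (L_le_mtcm one_B). Qed.

Lemma mtcm_le1 : mtcm C <= 1.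
Proof. exact: mtcm_le L_le1. Qed.


Lemma L_cont x y (δ : R) : pos_orthant x -> pos_orthant y -> 0 < δ < 1 ->
  (forall j, `|x j - y j| <= δ * x j) -> `|L x - L y| <= δ * L x.
Proof.
move=> xp yp /andP[δ0 δ1] H.
have l0 := L_ge0 xp.
have up : L y <= (1 + δ) * L x.
  have p1 : 0 < 1 + δ by lra.
  rewrite -(L_hom xp p1); apply: L_mono => //; first exact: pos_scale.
  move=> j; have := H j; rewrite ler_norml => /andP[h1 h2].
  rewrite mulrDl mul1r; lra.
have lo : (1 - δ) * L x <= L y.
  have p2 : 0 < 1 - δ by lra.
  rewrite -(L_hom xp p2); apply: L_mono => //; first exact: pos_scale.
  move=> j; have := H j; rewrite ler_norml => /andP[h1 h2].
  rewrite mulrBl mul1r; lra.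
rewrite ler_norml; apply/andP; split; nra.
Qed.

Lemma prod_cont (s : seq 'I_d) :
  continuous (fun v : 'rV[R]_d => \prod_(i <- s) v ord0 i).
Proof.
elim: s => [|i s IH].
  under eq_fun do rewrite big_nil. exact: cst_continuous.
under eq_fun do rewrite big_cons.
move=> v; apply: continuousM; [exact: coord_continuous | exact: IH].
Qed.

Lemma B_upper (c : R) b : 0 < c -> @Bset R d b -> (forall k, c <= b k) ->
  forall j, b j <= (c ^+ d.-1)^-1.
Proof.
move=> c0 [bp bprod] bc j.
have : b j * c ^+ d.-1 <= 1.
  rewrite -bprod (bigD1 j) //= ler_pM2l //.
  have -> : c ^+ d.-1 = \prod_(k | k != j) c.
    by rewrite prodr_const cardC1 card_ord.
  by apply: ler_prod => k _; rewrite bc ltW.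
by rewrite -[(_)^-1]mul1r ler_pdivlMr // exprn_gt0.
Qed.

Lemma attain : exists2 b, @Bset R d b & L b = mtcm C.
Proof.
set s := mtcm C.
have [s0|s0] := leP s 0.
  exists (fun _ => 1); first exact: one_B.
  apply/eqP; rewrite eq_le (L_le_mtcm one_B) /=.
  exact: le_trans s0 (L_ge0 (proj1 (one_B))).
pose c := s / 2.
have c0 : 0 < c by rewrite /c; lra.
pose D := (c ^+ d.-1)^-1.
pose K := [set v : 'rV[R]_d | forall i, `[c, D]%classic (v ord0 i)] `&`
          [set v | \prod_i v ord0 i = 1].
pose F := fun v : 'rV[R]_d => L (fun j => v ord0 j).
have KB v : K v -> @Bset R d (fun j => v ord0 j) /\ forall j, c <= v ord0 j.
  case=> /= H1 H2.
  have cv j : c <= v ord0 j by have := H1 j; rewrite /= in_itv /= => /andP[].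
  by split=> //; split=> // j; apply: lt_le_trans (cv j).
have rowB b : @Bset R d b -> (forall k, c <= b k) -> K (\row_j b j).
  move=> Bb bc; split => /=.
    by move=> i; rewrite in_itv /= mxE bc /=; apply: B_upper.
  by under eq_bigr do rewrite mxE; case: Bb.
have rowF b : F (\row_j b j) = L b.
  by rewrite /F; congr L; apply: funext => j; rewrite mxE.
have [b0 Bb0 Lb0] : exists2 b0, @Bset R d b0 & c < L b0.
  have [_ [b0 Bb0 <-] H] := sup_adherent c0 LB_sup.
  exists b0 => //; move: H; have -> : sup LB = s by []. rewrite /c; lra.
have K0 : K !=set0.
  exists (\row_j b0 j); apply: rowB => // k.
  exact: ltW (lt_le_trans Lb0 (L_le k (proj1 Bb0))).
have cK : compact K.
  apply: compact_closedI.
    by apply: (@rV_compact _ _ (fun=> `[c, D]%classic)) => i; exact: segment_compact.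
  apply: (@preimage_closed _ _ (fun v : 'rV[R]_d => \prod_i v ord0 i) [set x | x = 1]); last exact: closed_eq.
  by move=> v _; apply: prod_cont.
have Fc : {within K, continuous F}.
  apply/subspace_continuousP => v vK.
  have [Bv cv] := KB v vK.
  apply/cvgrPdist_le => e e0.
  pose δ := Num.min (e / 2) (1 / 2).
  have δ0 : 0 < δ by rewrite lt_min !divr_gt0.
  have δ1 : δ < 1 by rewrite gt_min; apply/orP; right; lra.
  have δe : δ <= e / 2 by rewrite ge_min lexx.
  rewrite near_withinE.
  apply/nbhs_ballP; exists (δ * c); first by rewrite /= mulr_gt0.
  move=> w vw wK.
  have [Bw cw] := KB w wK.
  rewrite /from_subspace /F.
  have Fv1 := L_le1 Bv.
  apply: le_trans (@L_cont _ _ δ (proj1 Bv) (proj1 Bw) _ _) _.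
  - by rewrite δ0 δ1.
  - move=> j; case: vw => _ /(_ ord0 j).
    rewrite /ball /= => /ltW H; apply: le_trans H _.
    by rewrite ler_pM2l.
  - have := L_ge0 (proj1 Bv); nra.
have [v vK vmax] := compact_EVT_max K0 cK Fc.
have [Bv cv] := KB v (set_mem vK).
exists (fun j => v ord0 j) => //.
have b0K : K (\row_j b0 j).
  apply: rowB => // k.
  exact: ltW (lt_le_trans Lb0 (L_le k (proj1 Bb0))).
apply/eqP; rewrite eq_le (L_le_mtcm Bv) /=; apply: mtcm_le => b Bb.
have [H|H] := pselect (forall k, c <= b k).
  by rewrite -rowF; apply: (vmax (\row_j b j)); rewrite inE; exact: rowB.
move/existsNP: H => [k /negP]; rewrite -ltNge => bk.
apply: le_trans (L_le k (proj1 Bb)) _; apply: ltW; apply: lt_trans bk _.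
apply: lt_le_trans Lb0 _; rewrite -rowF; apply: (vmax (\row_j b0 j)).
by rewrite inE.
Qed.
End Tail.

Section Main.
Variables (R : realType) (d : nat) (hd : (0 < d)%N).
Implicit Types (C : ('I_d -> R) -> R).

Lemma coord_min_char (x : 'I_d -> R) :
  exists k, coord_min x = x k /\ forall j, x k <= x j.
Proof.
pose i0 := Ordinal hd.
case: (@arg_minP _ _ _ i0 xpredT x isT) => k _ Hk.
exists k; split; last by move=> j; exact: Hk.
apply/eqP; rewrite eq_le; apply/andP; split.
  have : has_lbound (range x) by exists (x k) => _ [j _ <-]; exact: Hk.
  by move/ge_inf; apply; exists k.
by apply: lb_le_inf; [exists (x k), k | move=> _ [j _ <-]; exact: Hk].
Qed.

Lemma part_ii C : copula C -> has_tail_copula C ->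
  (mtcm C = 1 <-> forall x, pos_orthant x -> tail_copula C x = coord_min x).
Proof.
move=> cC hC; split.
  move=> m1.
  have [b Bb Lb] := attain hd cC hC.
  have b1 : forall j, 1 <= b j by move=> j; rewrite -m1 -Lb; exact: (L_le cC hC j (proj1 Bb)).
  have bone : b = fun _ => 1.
    apply: funext => j; apply/eqP; rewrite eq_le b1 andbT.
    have := B_upper (ltr01 : (0:R) < 1) Bb b1 j.
    by rewrite expr1n invr1.
  rewrite bone in Lb; move=> x xp.
  have [k [-> xk]] := coord_min_char x.
  apply/eqP; rewrite eq_le (L_le cC hC k xp) /=.
  have m0 : 0 < x k := xp k.
  have := L_hom hC (proj1 (one_B R d)) m0.
  rewrite m1 in Lb; rewrite Lb mulr1 => <-.
  apply: (L_mono cC hC) => //.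
move=> H.
have L1 : tail_copula C (fun _ => 1) = 1.
  rewrite H; last exact: (proj1 (one_B R d)).
  by have [k [-> _]] := coord_min_char (fun _ : 'I_d => 1 : R).
apply/eqP; rewrite eq_le (mtcm_le1 hd cC hC) /= -{1}L1.
exact: (L_le_mtcm hd cC hC (one_B R d)).
Qed.

Lemma part_iii C : copula C -> has_tail_copula C ->
  (mtcm C = 0 <-> forall x, pos_orthant x -> tail_copula C x = 0).
Proof.
move=> cC hC; split.
  move=> m0 x xp.
  have L1 : tail_copula C (fun _ => 1) = 0.
    apply/eqP; rewrite eq_le (L_ge0 hd cC hC (proj1 (one_B R d))) andbT.
    by rewrite -m0; exact: (L_le_mtcm hd cC hC (one_B R d)).
  pose M := \sum_j x j.
  have xM j : x j <= M.
    rewrite /M (bigD1 j) //= lerDl sumr_ge0 // => k _; exact: ltW.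
  have M0 : 0 < M := lt_le_trans (xp (Ordinal hd)) (xM _).
  apply/eqP; rewrite eq_le (L_ge0 hd cC hC xp) andbT.
  have := L_hom hC (proj1 (one_B R d)) M0; rewrite L1 mulr0 => <-.
  apply: (L_mono cC hC) => //; first exact: pos_scale (proj1 (one_B R d)) M0.
  by move=> j /=; rewrite mulr1.
move=> H; apply/eqP; rewrite eq_le (mtcm_ge0 hd cC hC) andbT.
by apply: mtcm_le => b [bp _]; rewrite H.
Qed.

Lemma part_iv C1 C2 : copula C1 -> copula C2 -> has_tail_copula C1 -> has_tail_copula C2 ->
  (forall x, pos_orthant x -> tail_copula C1 x <= tail_copula C2 x) ->
  mtcm C1 <= mtcm C2.
Proof.
move=> c1 c2 h1 h2 H; apply: mtcm_le => b Bb.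
exact: le_trans (H _ (proj1 Bb)) (L_le_mtcm hd c2 h2 Bb).
Qed.

Lemma part_v C1 C2 : copula C1 -> copula C2 -> has_tail_copula C1 -> has_tail_copula C2 ->
  forall t : R, 0 <= t <= 1 ->
  mtcm (fun u => t * C1 u + (1 - t) * C2 u) <= t * mtcm C1 + (1 - t) * mtcm C2.
Proof.
move=> c1 c2 h1 h2 t /andP[t0 t1]; apply: mtcm_le => b Bb.
have -> : tail_copula (fun u => t * C1 u + (1 - t) * C2 u) b =
    t * tail_copula C1 b + (1 - t) * tail_copula C2 b.
  apply: cvg_lim => //.
  have -> : scaled (fun u => t * C1 u + (1 - t) * C2 u) b =
      fun s => t * scaled C1 b s + (1 - t) * scaled C2 b s.
    by apply: funext => s; rewrite /scaled mulrDl !mulrA.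
  apply: cvgD; apply: cvgMl_tmp; [exact: h1 (proj1 Bb) | exact: h2 (proj1 Bb)].
have u1 := L_le_mtcm hd c1 h1 Bb.
have u2 := L_le_mtcm hd c2 h2 Bb.
apply: lerD; apply: ler_wpM2l => //; lra.
Qed.


Lemma part_vi C : copula C -> has_tail_copula C ->
  forall Cn : nat -> ('I_d -> R) -> R,
  (forall n, copula (Cn n)) -> (forall n, has_tail_copula (Cn n)) ->
  (forall x, pos_orthant x ->
     tail_copula (Cn n) x @[n --> \oo] --> tail_copula C x) ->
  mtcm (Cn n) @[n --> \oo] --> mtcm C.
Proof.
move=> cC hC Cn cCn hCn Hc.
have [bs Bbs Lbs] := attain hd cC hC.
set s := mtcm C in Lbs *.
have s0 : 0 <= s := mtcm_ge0 hd cC hC.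
have s1 : s <= 1 := mtcm_le1 hd cC hC.
apply/cvgrPdist_le => e e0.
have lowN : \forall n \near \oo, s - e <= mtcm (Cn n).
  move/cvgrPdist_le: (Hc bs (proj1 Bbs)) => /(_ e e0).
  apply: filterS => n H.
  apply: le_trans (L_le_mtcm hd (cCn n) (hCn n) Bbs).
  move: H; rewrite Lbs ler_norml => /andP[h1 h2]; lra.
pose ε := Num.min (e / 2) (1 / 2).
have ε0 : 0 < ε by rewrite lt_min !divr_gt0.
have ε1 : ε <= 1 / 2 by rewrite ge_min lexx orbT.
have εe : ε <= e / 2 by rewrite ge_min lexx.
pose c := ε.
pose D := (c ^+ d.-1)^-1.
pose h := ε * c.
have h0 : 0 < h by rewrite mulr_gt0.
pose N := (Num.trunc (D / h)).+1.
pose g (k : {ffun 'I_d -> 'I_N}) : 'I_d -> R := fun j => ((k j)%:R + 1) * h.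
have gpos k : pos_orthant (g k).
  by move=> j; rewrite /g mulr_gt0 // ltr_wpDl.
have Hg : \forall n \near \oo, forall k : {ffun 'I_d -> 'I_N},
    tail_copula (Cn n) (g k) <= tail_copula C (g k) + ε.
  apply: filter_forall => k.
  move/cvgrPdist_le: (Hc (g k) (gpos k)) => /(_ ε ε0).
  apply: filterS => n; rewrite ler_norml => /andP[h1 h2]; lra.
have upN : \forall n \near \oo, mtcm (Cn n) <= s + e.
  apply: filterS Hg => n Hn.
  apply: mtcm_le => b Bb.
  have [H|H] := pselect (forall k, c <= b k).
    have bD := B_upper (ε0 : 0 < c) Bb H.
    pose k : {ffun 'I_d -> 'I_N} := [ffun j => inord (Num.trunc (b j / h))].
    have kE j : (k j : nat) = Num.trunc (b j / h).
      rewrite /k ffunE inordK // ltnS; apply: le_truncn.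
      by rewrite ler_pM2r ?invr_gt0.
    have bh j : 0 <= b j / h by rewrite divr_ge0 // ltW // (proj1 Bb).
    have gb j : b j <= g k j.
      have /andP[_ ] := truncn_itv (bh j).
      by rewrite /g kE ltr_pdivrMr // -natr1 => /ltW.
    have gb2 j : g k j <= b j + h.
      have /andP[+ _] := truncn_itv (bh j).
      by rewrite /g kE ler_pdivlMr // mulrDl mul1r lerD2r.
    apply: le_trans (L_mono (cCn n) (hCn n) (proj1 Bb) (gpos k) gb) _.
    apply: le_trans (Hn k) _.
    have p1 : 0 < 1 + ε by lra.
    have : tail_copula C (g k) <= (1 + ε) * tail_copula C b.
      rewrite -(L_hom hC (proj1 Bb) p1).
      apply: (L_mono cC hC (gpos k) (pos_scale (proj1 Bb) p1)) => j.
      apply: le_trans (gb2 j) _; rewrite mulrDl mul1r lerD2l /h.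
      by rewrite ler_pM2l // H.
    have := L_le_mtcm hd cC hC Bb; rewrite -/s.
    have := L_ge0 hd cC hC (proj1 Bb).
    nra.
  move/existsNP: H => [k /negP]; rewrite -ltNge => bk.
  apply: le_trans (L_le (cCn n) (hCn n) k (proj1 Bb)) _.
  rewrite /c in bk; lra.
near=> n.
have hl : s - e <= mtcm (Cn n) by near: n; exact: lowN.
have hu : mtcm (Cn n) <= s + e by near: n; exact: upN.
rewrite ler_norml; apply/andP; split; lra.
Unshelve. all: by end_near.
Qed.

End Main.

Unset Implicit Arguments.
Set Strict Implicit.

Theorem proposition2p2 (R : realType) (d : nat) (hd : (2 <= d)%N)
  (C C1 C2 : ('I_d -> R) -> R) :
  copula C -> copula C1 -> copula C2 ->
  has_tail_copula C -> has_tail_copula C1 -> has_tail_copula C2 ->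
  (* (i) *)
      (exists2 b, Bset b & tail_copula C b = mtcm C) /\
      (* (ii) *)
      (mtcm C = 1 <-> forall x, pos_orthant x -> tail_copula C x = coord_min x) /\
      (* (iii) *)
      (mtcm C = 0 <-> forall x, pos_orthant x -> tail_copula C x = 0) /\
      (* (iv) *)
      ((forall x, pos_orthant x -> tail_copula C1 x <= tail_copula C2 x) ->
         mtcm C1 <= mtcm C2) /\
      (* (v) *)
      (forall t : R, 0 <= t <= 1 ->
         mtcm (fun u => t * C1 u + (1 - t) * C2 u) <= t * mtcm C1 + (1 - t) * mtcm C2) /\
      (* (vi) *)
      (forall Cn : nat -> ('I_d -> R) -> R,
         (forall n, copula (Cn n)) -> (forall n, has_tail_copula (Cn n)) ->
         (forall x, pos_orthant x ->
            tail_copula (Cn n) x @[n --> \oo] --> tail_copula C x) ->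
         mtcm (Cn n) @[n --> \oo] --> mtcm C).
Proof.
move=> cC c1 c2 hC h1 h2.
have hd' : (0 < d)%N := ltnW hd.
split; first exact: (attain hd' cC hC).
split; first exact: (part_ii hd' cC hC).
split; first exact: (part_iii hd' cC hC).
split; first exact: (part_iv hd' c1 c2 h1 h2).
split; first exact: (part_v hd' c1 c2 h1 h2).
move=> Cn cCn hCn Hc; exact: (part_vi hd' cC hC cCn hCn Hc).
Qed.
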